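(* Let $\mathcal{H}=\operatorname{coh}\mathbb{X}$ for a weighted projective line of weight type $(p_1,\ldots,p_t)$, where $p_1,\ldots,p_r$ are even and $p_{r+1},\ldots,p_t$ are odd, and $\mathcal{C}=\mathcal{C}(\mathcal{H})$. (i) If $r\ge1$, then the linear forms (on $\overline{K}_0(\mathcal{C})$ induced by) $\langle\hat s_1,-\rangle,\ \langle\tilde s_2-\tilde s_1,-\rangle,\ldots,\langle\tilde s_r-\tilde s_1,-\rangle$ form a $\mathbb{Z}$-basis of $\overline{K}_0(\mathcal{C})^*=\operatorname{Hom}(\overline{K}_0(\mathcal{C}),\mathbb{Z})$, where $\hat s_1=\sum_{j=0}^{p_1-1}(-1)^j\Phi^js_1$ and $\tilde s_i=\sum_{j=0}^{p_i/2-1}\Phi^{2j}s_i$. (ii) If $r=0$, then $\operatorname{rk}_2$ and $\deg_2$ form a $\mathbb{Z}_2$-basis of $\overline{K}_0(\mathcal{C})^*=\operatorname{Hom}(\overline{K}_0(\mathcal{C}),\mathbb{Z}_2)$.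
   Context: $k$ algebraically closed; $\mathcal{H}=\operatorname{coh}\mathbb{X}$ hereditary abelian with AR translation $\tau$ and Serre duality; finite length objects form exceptional tubes of ranks $p_1,\ldots,p_t$ and homogeneous tubes of rank $1$. $L$ structure sheaf, $a=[L]$; $S_i$ ($1\le i\le t$) the unique simple in the $i$-th exceptional tube with $\operatorname{Hom}(L,S_i)\ne0$, $s_i=[S_i]$; $S_0$ simple in a homogeneous tube, $s_0=[S_0]$. Euler form $\langle[X],[Y]\rangle=\dim\operatorname{Hom}(X,Y)-\dim\operatorname{Ext}^1(X,Y)$; Coxeter transformation $\Phi[X]=[\tau X]$ (so $\Phi^{p_i}s_i=s_i$). $\operatorname{rk}(x)=\langle x,s_0\rangle$, $\deg(x)=\sum_{j=0}^{p-1}\langle\Phi^ja,x-\operatorname{rk}(x)a\rangle$, $p=\operatorname{lcm}(p_i)$; $\operatorname{rk}_2,\deg_2$ their reductions mod $2$ on $K_0(\mathcal{H})\otimes\mathbb{Z}_2$. With $\mathcal{D}=D^b(\mathcal{H})$, $F=\tau^{-1}\Sigma$, the cluster category $\mathcal{C}=\mathcal{D}/F^{\mathbb{Z}}$ has $\operatorname{Hom}_{\mathcal{C}}(X,Y)=\bigoplus_i\operatorname{Hom}_{\mathcal{D}}(X,F^iY)$ and projection $\pi$; $\overline{K}_0(\mathcal{C})$ is the Grothendieck group with respect to induced triangles (images under $\pi$ of exact triangles), equal to $\operatorname{Coker}(1+\Phi)$ on $K_0(\mathcal{H})$; linear forms on $K_0(\mathcal{H})$ (resp. mod 2) killing $\operatorname{Im}(1+\Phi)$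 are identified with linear forms on $\overline{K}_0(\mathcal{C})$. *)

(* Defs.v *)
From HB Require Import structures.
From mathcomp Require Import all_boot all_order all_algebra.
Set Implicit Arguments. Unset Strict Implicit. Unset Printing Implicit Defensive.
Import GRing.Theory Num.Theory.
Local Open Scope ring_scope.

(* Generators of K_0(H): a = [L], s_0 = [S_0], and s_{i,j} = [tau^j S_i]
   (i indexes the t exceptional tubes, j : 'I_(p i)); they satisfy the
   relations s_0 = \sum_j s_{i,j} for every i.  K_0(H) is the quotient of the
   free abelian group on gen t p by these relations. *)
Inductive gen (t : nat) (p : 'I_t -> nat) :=
  | Ga | Gs0 | Gs (i : 'I_t) (j : 'I_(p i)).
Arguments gen : clear implicits.
Arguments Ga {t p}. Arguments Gs0 {t p}. Arguments Gs {t p}.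

Definition gen_code t p (g : gen t p) : (bool + {i : 'I_t & 'I_(p i)})%type :=
  match g with Ga => inl true | Gs0 => inl false | Gs i j => inr (Tagged _ j) end.
Definition gen_decode t p (c : (bool + {i : 'I_t & 'I_(p i)})%type) : gen t p :=
  match c with inl true => Ga | inl false => Gs0 | inr u => Gs (tag u) (tagged u) end.
Lemma gen_codeK t p : cancel (@gen_code t p) (@gen_decode t p).
Proof. by case. Qed.
HB.instance Definition _ t p := Finite.copy (gen t p) (can_type (@gen_codeK t p)).

Section Model.
Variables (t : nat) (p : 'I_t -> nat).
Local Notation gen := (gen t p).

(* Elements of K_0(H), represented by integer combinations of generators. *)
Definition delta (g : gen) : gen -> int := fun h => (h == g)%:Z.

Definition eulerG (g h : gen) : int :=
  match g, h with
  | Ga, Ga => 1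
  | Ga, Gs0 => 1
  | Gs0, Ga => -1
  | Gs0, Gs0 => 0
  | Ga, Gs _ j => (val j == 0)%N%:Z
  | Gs i j, Ga => - ((val j).+1 == p i)%:Z
  | Gs0, Gs _ _ => 0
  | Gs _ _, Gs0 => 0
  | Gs i j, Gs k l =>
      if i == k then (val j == val l)%:Z - (val l == ((val j).+1 %% p i)%N)%:Z
      else 0
  end.

Definition euler (x y : gen -> int) : int :=
  \sum_g \sum_h x g * y h * eulerG g h.

(* Coxeter transformation Phi = [tau -] on generators:
   Phi a = [L(omega)] = a + (t-2) s0 - \sum_i s_{i,0},
   Phi s0 = s0, Phi s_{i,j} = s_{i,j+1 mod p_i}. *)
Definition coxG (g : gen) : gen -> int :=
  match g with
  | Ga => fun h => match h with
                   | Ga => 1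
                   | Gs0 => t%:Z - 2
                   | Gs _ l => - (val l == 0)%N%:Z
                   end
  | Gs0 => delta Gs0
  | Gs i j => fun h => match h with
                       | Gs k l => ((k == i) && (val l == ((val j).+1 %% p i)%N))%:Z
                       | _ => 0
                       end
  end.

Definition cox (x : gen -> int) : gen -> int :=
  fun h => \sum_g x g * coxG g h.

Definition simple_s (i : 'I_t) : gen -> int :=
  fun h => match h with
           | Gs k l => ((k == i) && (val l == 0)%N)%:Z
           | _ => 0
           end.

Definition hat_s (i : 'I_t) : gen -> int :=
  fun h => \sum_(j < p i) (-1) ^+ j * iter j cox (simple_s i) h.

Definition tilde_s (i : 'I_t) : gen -> int :=
  fun h => \sum_(j < (p i)./2) iter (2 * j) cox (simple_s i) h.

Definition pairing (v : gen -> int) : gen -> int := fun g => euler v (delta g).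

Definition rk (x : gen -> int) : int := euler x (delta Gs0).
Definition plcm : nat := \big[lcmn/1%N]_(i < t) p i.
Definition deg (x : gen -> int) : int :=
  \sum_(j < plcm) euler (iter j cox (delta Ga)) (fun h => x h - rk x * delta Ga h).

Definition rk2 : gen -> 'Z_2 := fun g => (rk (delta g))%:~R.
Definition deg2 : gen -> 'Z_2 := fun g => (deg (delta g))%:~R.

Definition evf (R : nzRingType) (f : gen -> R) (x : gen -> int) : R :=
  \sum_g (x g)%:~R * f g.

(* f : gen -> R defines an element of Hom(Kbar_0(C), R):
   it respects the relations of K_0(H) and kills Im(1 + Phi). *)
Definition is_Cbar_form (R : nzRingType) (f : gen -> R) : Prop :=
  (forall i : 'I_t, f Gs0 = \sum_(j < p i) f (Gs i j)) /\
  (forall g : gen, evf f (delta g) + evf f (cox (delta g)) = 0).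

Definition is_Cbar_dual_basis (R : nzRingType) (I : finType) (b : I -> gen -> R)
  : Prop :=
  (forall k, is_Cbar_form (b k)) /\
  (forall f : gen -> R, is_Cbar_form f ->
     exists! c : {ffun I -> R}, forall g, f g = \sum_k c k * b k g).

End Model.

(* Main.v *)
Require Import Defs.
From HB Require Import structures.
From mathcomp Require Import all_boot all_order all_algebra ring lra zify.
Import GRing.Theory Num.Theory.
Local Open Scope ring_scope.
Set Implicit Arguments. Unset Strict Implicit. Unset Printing Implicit Defensive.

Lemma gen_decodeK t p : cancel (@gen_decode t p) (@gen_code t p).
Proof. by case=> [[]|[i j]]. Qed.

Lemma sum_gen t p (R : nmodType) (F : gen t p -> R) :
  \sum_g F g = F Ga + F Gs0 + \sum_(i < t) \sum_(j < p i) F (Gs i j).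
Proof.
rewrite (reindex (@gen_decode t p)); last first.
  by apply: onW_bij; exists (@gen_code t p); [apply: gen_decodeK|apply: gen_codeK].
rewrite big_sumType /= big_bool /=.
by rewrite (sig_big_dep xpredT (fun _ _ => true) (fun i j => F (Gs i j))).
Qed.

Section Basic.
Variables (t : nat) (p : 'I_t -> nat).
Local Notation gen := (gen t p).

Lemma sum_deltar (R : nzRingType) (F : gen -> R) g :
  \sum_h F h * ((delta g h)%:~R) = F g.
Proof.
rewrite (bigD1 g) //= big1 /delta ?eqxx ?mulr1 ?addr0 //.
by move=> h /negbTE ->; rewrite mulr0.
Qed.

Lemma sum_deltal (R : nzRingType) (F : gen -> R) g :
  \sum_h ((delta g h)%:~R) * F h = F g.
Proof.
rewrite (bigD1 g) //= big1 /delta ?eqxx ?mul1r ?addr0 //.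
by move=> h /negbTE ->; rewrite mul0r.
Qed.

Lemma sum_deltar_int (F : gen -> int) g : \sum_h F h * delta g h = F g.
Proof. by rewrite -(sum_deltar F g); apply: eq_bigr => h _; rewrite intz. Qed.

Lemma sum_deltal_int (F : gen -> int) g : \sum_h delta g h * F h = F g.
Proof. by rewrite -(sum_deltal F g); apply: eq_bigr => h _; rewrite intz. Qed.

Lemma cox_delta (g h : gen) : cox (delta g) h = coxG g h.
Proof. exact: sum_deltal_int. Qed.

Lemma euler_deltar (x : gen -> int) g :
  euler x (delta g) = \sum_h x h * eulerG h g.
Proof.
apply: eq_bigr => h _.
rewrite -(sum_deltal_int (fun k => x h * eulerG h k) g).
by apply: eq_bigr => k _; rewrite mulrCA mulrA.
Qed.

Lemma euler_deltal (y : gen -> int) g :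
  euler (delta g) y = \sum_h y h * eulerG g h.
Proof.
rewrite /euler -(sum_deltal_int (fun k => \sum_h y h * eulerG k h) g).
apply: eq_bigr => h _; rewrite big_distrr; apply: eq_bigr => k _.
by rewrite -mulrA.
Qed.

Lemma euler_linr (x y1 y2 : gen -> int) c :
  euler x (fun h => y1 h - c * y2 h) = euler x y1 - c * euler x y2.
Proof.
rewrite /euler big_distrr -sumrB; apply: eq_bigr => g _.
rewrite big_distrr -sumrB; apply: eq_bigr => h _.
by rewrite /=; ring.
Qed.

Lemma pairing_sub (x y : gen -> int) g :
  pairing (fun h => x h - y h) g = pairing x g - pairing y g.
Proof.
rewrite /pairing /euler -sumrB; apply: eq_bigr => h _.
by rewrite -sumrB; apply: eq_bigr => k _; rewrite !mulrBl.
Qed.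

Lemma pairingE (x : gen -> int) g : pairing x g = \sum_h x h * eulerG h g.
Proof. exact: euler_deltar. Qed.

Lemma evf_delta (R : nzRingType) (f : gen -> R) g : evf f (delta g) = f g.
Proof. exact: sum_deltal. Qed.

Lemma evf_cox_delta (R : nzRingType) (f : gen -> R) g :
  evf f (cox (delta g)) = \sum_h (coxG g h)%:~R * f h.
Proof. by apply: eq_bigr => h _; rewrite cox_delta. Qed.

Lemma cox_ext (x y : gen -> int) : x =1 y -> cox x =1 cox y.
Proof. by move=> e h; apply: eq_bigr => g _; rewrite e. Qed.

End Basic.

Section Cbar.
Variables (t : nat) (p : 'I_t -> nat).
Local Notation gen := (gen t p).

Lemma coxsum_Gs0 (R : nzRingType) (f : gen -> R) :
  \sum_h (coxG Gs0 h)%:~R * f h = f Gs0.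
Proof. exact: sum_deltal. Qed.

Lemma coxsum_Gs (R : nzRingType) (f : gen -> R) i j :
  \sum_h (coxG (Gs i j) h)%:~R * f h = f (Gs i (ordS j)).
Proof.
rewrite sum_gen /= !mul0r !add0r (bigD1 i) //= [X in _ + X]big1 ?addr0; last first.
  move=> k nki; apply: big1 => l _; by rewrite (negbTE nki) /= mul0r.
rewrite (bigD1 (ordS j)) //= [X in _ + X]big1 ?addr0.
  by rewrite !eqxx /= mulr1z mul1r.
move=> l nl; have /negbTE -> : (val l != (j.+1 %% p i)%N) by [].
by rewrite andbF /= mulr0z mul0r.
Qed.

Lemma coxsum_Ga (R : nzRingType) (f : gen -> R) :
  \sum_h (coxG Ga h)%:~R * f h =
  f Ga + (t%:Z - 2)%:~R * f Gs0 -
  \sum_(i < t) \sum_(j < p i) ((val j == 0)%N)%:R * f (Gs i j).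
Proof.
rewrite sum_gen /= mul1r; congr (_ + _).
rewrite -sumrN; apply: eq_bigr => i _; rewrite -sumrN; apply: eq_bigr => j _.
by rewrite mulrNz mulNr.
Qed.

Lemma Cbar_formE (R : nzRingType) (f : gen -> R) :
  is_Cbar_form f <->
  [/\ (forall i : 'I_t, f Gs0 = \sum_(j < p i) f (Gs i j)),
      f Ga + (f Ga + (t%:Z - 2)%:~R * f Gs0 -
        \sum_(i < t) \sum_(j < p i) ((val j == 0)%N)%:R * f (Gs i j)) = 0,
      f Gs0 + f Gs0 = 0 &
      (forall i j, f (Gs i j) + f (Gs i (ordS j)) = 0)].
Proof.
rewrite /is_Cbar_form; split.
  case=> h1 h2; split => //.
  - by have := h2 Ga; rewrite evf_delta evf_cox_delta coxsum_Ga.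
  - by have := h2 Gs0; rewrite evf_delta evf_cox_delta coxsum_Gs0.
  - by move=> i j; have := h2 (Gs i j); rewrite evf_delta evf_cox_delta coxsum_Gs.
case=> h1 h2 h3 h4; split => // -[||i j]; rewrite evf_delta evf_cox_delta.
- by rewrite coxsum_Ga.
- by rewrite coxsum_Gs0.
- by rewrite coxsum_Gs.
Qed.

End Cbar.

Section Tube.
Variables (t : nat) (p : 'I_t -> nat).
Hypothesis hp0 : forall i, (0 < p i)%N.
Local Notation gen := (gen t p).

Definition z0 i : 'I_(p i) := Ordinal (hp0 i).

Lemma alt_tube (R : nzRingType) (f : gen -> R) i :
  (forall j, f (Gs i j) + f (Gs i (ordS j)) = 0) ->
  forall j, f (Gs i j) = (-1) ^+ (val j) * f (Gs i (z0 i)).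
Proof.
move=> h j; case: j => n hn /=; elim: n hn => [|n IH] hn.
  by rewrite expr0 mul1r; congr (f (Gs i _)); apply: val_inj.
have hn' : (n < p i)%N by apply: ltnW.
have -> : Ordinal hn = ordS (Ordinal hn').
  by apply: val_inj; rewrite /= modn_small.
have := h (Ordinal hn'); move/eqP; rewrite addrC addr_eq0 => /eqP ->.
by rewrite IH exprS mulN1r mulNr.
Qed.

End Tube.

Section Deg.
Variables (t : nat) (p : 'I_t -> nat).
Local Notation gen := (gen t p).

Lemma rk_delta (g : gen) : rk (delta g) = eulerG g Gs0.
Proof. by rewrite /rk euler_deltar sum_deltal_int. Qed.

Lemma cox_Ga (x : gen -> int) : cox x Ga = x Ga.
Proof.
rewrite /cox sum_gen /= mulr1 mulr0 addr0 big1 ?addr0 //.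
by move=> i _; apply: big1 => j _; rewrite mulr0.
Qed.

Lemma iter_cox_Ga j : iter j (@cox t p) (@delta t p Ga) Ga = 1.
Proof. by elim: j => [|j IH] /=; [rewrite /delta eqxx | rewrite cox_Ga]. Qed.

Lemma sum_pick n (F : 'I_n -> int) (l : 'I_n) :
  \sum_(m < n) F m * ((val m == val l)%N)%:Z = F l.
Proof.
rewrite (bigD1 l) //= eqxx mulr1 big1 ?addr0 // => m nml.
by have /negbTE -> : (val m != val l) by []; rewrite mulr0.
Qed.

Lemma sum_shift n (F : 'I_n -> int) (l : 'I_n) :
  \sum_(m < n) F m * ((val l == (m.+1 %% n))%N)%:Z = F (ord_pred l).
Proof.
rewrite (reindex (@ord_pred n)) /=; last exact: onW_bij (ord_pred_bij _).
rewrite -(sum_pick (fun m => F (ord_pred m)) l); apply: eq_bigr => m _.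
have e : ((ord_pred m).+1 %% n)%N = val m by exact: (congr1 val (ord_predK m)).
by rewrite e eq_sym.
Qed.

Lemma cox_Gs (x : gen -> int) i m :
  cox x (Gs i m) = - x Ga * ((val m == 0)%N)%:Z + x (Gs i (ord_pred m)).
Proof.
rewrite /cox sum_gen /= mulr0 addr0 mulrN -mulNr; congr (_ + _).
rewrite (bigD1 i) //= [X in _ + X]big1 ?addr0; last first.
  by move=> k nki; apply: big1 => l _; rewrite eq_sym (negbTE nki) mulr0.
by rewrite eqxx -(sum_shift (fun l => x (Gs i l))).
Qed.

Definition E (x : gen -> int) i (l : 'I_(p i)) := euler x (delta (Gs i l)).

Lemma E_formula (x : gen -> int) i l :
  E x l = x Ga * ((val l == 0)%N)%:Z + x (Gs i l) - x (Gs i (ord_pred l)).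
Proof.
rewrite /E euler_deltar sum_gen /= mulr0 addr0 -addrA; congr (_ + _).
rewrite (bigD1 i) //= [X in _ + X]big1 ?addr0; last first.
  by move=> k nki; apply: big1 => l' _; rewrite (negbTE nki) mulr0.
rewrite eqxx.
under eq_bigr do rewrite mulrBr.
rewrite sumrB sum_pick.
by rewrite (sum_shift (fun m => x (Gs i m))).
Qed.

Lemma E_cox (x : gen -> int) i l : E (cox x) l = E x (@ord_pred (p i) l).
Proof.
rewrite !E_formula !cox_Gs cox_Ga.
have -> : ((val (ord_pred l) == 0)%N)%:Z = ((val l == 0)%N)%:Z -
    (((val l == 0)%N)%:Z - ((val (ord_pred l) == 0)%N)%:Z) by ring.
ring.
Qed.

End Deg.

Section Deg2.
Variables (t : nat) (p : 'I_t -> nat).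
Hypothesis hp0 : forall i, (0 < p i)%N.
Local Notation gen := (gen t p).
Local Notation X j := (iter j (@cox t p) (@delta t p Ga)).

Lemma E_iter i j (l : 'I_(p i)) : E (X j) l = ((j %% p i == l)%N)%:Z.
Proof.
elim: j l => [|j IH] l.
  by rewrite /E euler_deltal sum_deltal_int /= mod0n eq_sym.
rewrite [X j.+1]/= E_cox IH.
pose u : 'I_(p i) := Ordinal (ltn_pmod j (hp0 i)).
have -> : (j %% p i)%N = val u by [].
have -> : (j.+1 %% p i)%N = val (ordS u) by rewrite /= -addn1 -modnDml addn1.
have -> : (val u == val (ord_pred l)) = (u == ord_pred l) by [].
have -> : (val (ordS u) == val l) = (ordS u == l) by [].
by rewrite (can2_eq (@ordSK _) (@ord_predK _)).
Qed.

Lemma deg_Ga : deg (@delta t p Ga) = 0.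
Proof.
rewrite /deg big1 // => j _; rewrite euler_linr rk_delta /=.
by rewrite mul1r subrr.
Qed.

Lemma deg_Gs0 : deg (@delta t p Gs0) = (plcm p)%:Z.
Proof.
rewrite /deg (eq_bigr (fun _ => 1)); last first.
  move=> j _; rewrite euler_linr rk_delta /= mul0r subr0 euler_deltar sum_gen /=.
  rewrite mulr0 addr0 mulr1 iter_cox_Ga big1 ?addr0 // => i _.
  by apply: big1 => l _; rewrite mulr0.
by rewrite sumr_const card_ord natz.
Qed.

Lemma deg_Gs i l : deg (@delta t p (Gs i l)) = \sum_(j < plcm p) ((j %% p i == val l)%N)%:Z.
Proof.
apply: eq_bigr => j _; rewrite euler_linr rk_delta /= mul0r subr0.
exact: E_iter.
Qed.

End Deg2.

Lemma count_mod d q l : (0 < d)%N -> (l < d)%N ->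
  \sum_(j < q * d) ((j %% d == l)%N)%:Z = q%:Z.
Proof.
move=> d0 ld; elim: q => [|q IH]; first by rewrite mul0n big_ord0.
rewrite -(big_mkord xpredT (fun j => ((j %% d == l)%N)%:Z)) in IH.
rewrite -(big_mkord xpredT (fun j => ((j %% d == l)%N)%:Z)).
rewrite mulSn addnC (@big_cat_nat _ _ _ (q * d)) //= ?leq_addr // IH.
rewrite -{1}[(q * d)%N]add0n big_addn addKn big_mkord.
rewrite (eq_bigr (fun j : 'I_d => 1 * ((val j == val (Ordinal ld))%N)%:Z)); last first.
  by move=> j _; rewrite /= addnC modnMDl modn_small // mul1r.
rewrite (sum_pick (fun _ => 1) (Ordinal ld)).
by rewrite -addn1 PoszD addrC.
Qed.

Lemma Z2_two : (2%:R : 'Z_2) = 0.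
Proof. by apply/eqP. Qed.

Lemma Z2_nat n : (n%:R : 'Z_2) = (odd n)%:R.
Proof.
elim: n => // n IH; rewrite -[n.+1]addn1 natrD IH addn1 /=.
by case: (odd n) => /=; [rewrite -natrD Z2_two | rewrite add0r].
Qed.

Lemma Z2_add_same (x : 'Z_2) : x + x = 0.
Proof. by rewrite -mulr2n -mulr_natr Z2_two mulr0. Qed.

Lemma Z2_N1 : (-1 : 'Z_2) = 1.
Proof. by apply/eqP; rewrite eq_sym -subr_eq0 opprK Z2_add_same. Qed.

Lemma sum_is0 (R : nzRingType) n : (0 < n)%N ->
  \sum_(j < n) ((val j == 0)%N)%:R = 1 :> R.
Proof.
move=> n0; rewrite (bigD1 (Ordinal n0)) //= big1 ?addr0 // => j nj.
by have /negbTE -> : (val j != 0)%N by [].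
Qed.

Lemma odd_plcm t (p : 'I_t -> nat) : (forall i, odd (p i)) -> odd (plcm p).
Proof.
move=> ho; rewrite /plcm; apply: (big_ind odd) => // a b oa ob.
have : (lcmn a b %| a * b)%N by rewrite dvdn_lcm dvdn_mulr // dvdn_mull.
case/dvdnP => k e; move: (oddM a b); rewrite oa ob e oddM /=.
by case/andP.
Qed.

Lemma dvd_plcm t (p : 'I_t -> nat) i : (p i %| plcm p)%N.
Proof. exact: (@biglcmn_sup _ i). Qed.

Section PartII.
Variables (t : nat) (p : 'I_t -> nat).
Hypothesis hp0 : forall i, (0 < p i)%N.
Hypothesis hodd : forall i, odd (p i).
Local Notation gen := (gen t p).

Lemma rk2_Ga : @rk2 t p Ga = 1. Proof. by rewrite /rk2 rk_delta. Qed.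
Lemma rk2_Gs0 : @rk2 t p Gs0 = 0. Proof. by rewrite /rk2 rk_delta. Qed.
Lemma rk2_Gs i j : @rk2 t p (Gs i j) = 0. Proof. by rewrite /rk2 rk_delta. Qed.
Lemma deg2_Ga : @deg2 t p Ga = 0. Proof. by rewrite /deg2 deg_Ga. Qed.
Lemma deg2_Gs0 : @deg2 t p Gs0 = 1.
Proof. by rewrite /deg2 deg_Gs0 -pmulrn Z2_nat odd_plcm. Qed.
Lemma deg2_Gs i j : @deg2 t p (Gs i j) = 1.
Proof.
rewrite /deg2 deg_Gs //; have e := divnK (dvd_plcm p i).
rewrite -(big_mkord xpredT (fun k => ((k %% p i == val j)%N)%:Z)) -{1}e big_mkord.
rewrite count_mod ?ltn_ord //.
have -> : ((plcm p %/ p i)%:Z)%:~R = ((plcm p %/ p i)%:R : 'Z_2) by [].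
rewrite Z2_nat.
by have := odd_plcm hodd; rewrite -{1}e oddM => /andP [-> _].
Qed.

Lemma rk2_Cbar : is_Cbar_form (@rk2 t p).
Proof.
apply/Cbar_formE; split.
- by move=> i; rewrite rk2_Gs0 big1 // => j _; rewrite rk2_Gs.
- rewrite rk2_Ga rk2_Gs0 mulr0 addr0 big1 ?subr0 ?Z2_add_same // => i _.
  by apply: big1 => j _; rewrite rk2_Gs mulr0.
- by rewrite rk2_Gs0 addr0.
- by move=> i j; rewrite !rk2_Gs addr0.
Qed.

Lemma deg2_Cbar : is_Cbar_form (@deg2 t p).
Proof.
apply/Cbar_formE; split.
- move=> i; rewrite deg2_Gs0 (eq_bigr (fun _ => 1)); last by move=> j _; rewrite deg2_Gs.
  by rewrite sumr_const card_ord -mulr_natr mul1r Z2_nat hodd.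
- rewrite deg2_Ga deg2_Gs0 !add0r mulr1.
  rewrite (eq_bigr (fun _ => 1)); last first.
    by move=> i _; under eq_bigr do rewrite deg2_Gs mulr1; rewrite sum_is0.
  rewrite sumr_const card_ord intrB /= -mulr_natr mul1r.
  have -> : (t%:Z)%:~R = (t%:R : 'Z_2) by [].
  have -> : (2%:Z)%:~R = (2%:R : 'Z_2) by [].
  by rewrite addrAC subrr add0r Z2_two oppr0.
- by rewrite deg2_Gs0 Z2_add_same.
- by move=> i j; rewrite !deg2_Gs Z2_add_same.
Qed.

Lemma Z2_tube (f : gen -> 'Z_2) : is_Cbar_form f -> forall i j, f (Gs i j) = f Gs0.
Proof.
case/Cbar_formE => h1 _ _ h4 i j.
have ht := alt_tube hp0 (h4 i).
rewrite ht Z2_N1 expr1n mul1r (h1 i).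
rewrite (eq_bigr (fun _ => f (Gs i (z0 hp0 i)))); last first.
  by move=> k _; rewrite ht Z2_N1 expr1n mul1r.
by rewrite sumr_const card_ord -mulr_natr Z2_nat hodd mulr1.
Qed.

Lemma partII : is_Cbar_dual_basis
  (fun k : 'I_2 => if val k == 0%N then @rk2 t p else @deg2 t p).
Proof.
split.
  by case=> [[|[|]]] //= _; [apply: rk2_Cbar | apply: deg2_Cbar].
move=> f hf.
exists [ffun k : 'I_2 => if val k == 0%N then f Ga else f Gs0]; split.
  move=> g; rewrite !big_ord_recl big_ord0 addr0 /= !ffunE /=.
  case: g => [||i j].
  - by rewrite rk2_Ga deg2_Ga mulr1 mulr0 addr0.
  - by rewrite rk2_Gs0 deg2_Gs0 mulr1 mulr0 add0r.
  - by rewrite rk2_Gs deg2_Gs mulr1 mulr0 add0r Z2_tube.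
move=> c hc; apply/ffunP => k; rewrite ffunE.
have hGa := hc Ga; have hGs0 := hc Gs0.
rewrite !big_ord_recl big_ord0 addr0 /= in hGa hGs0.
rewrite rk2_Ga deg2_Ga mulr1 mulr0 addr0 in hGa.
rewrite rk2_Gs0 deg2_Gs0 mulr1 mulr0 add0r big_ord0 addr0 in hGs0.
case: k => [[|[|]]] //= hk.
  by rewrite hGa; have -> : Ordinal hk = ord0 by apply: val_inj.
by rewrite hGs0; have -> : Ordinal hk = lift ord0 ord0 by apply: val_inj.
Qed.

End PartII.

Lemma odd_ordS n (x : 'I_n) : ~~ odd n -> odd (val (ordS x)) = ~~ odd x.
Proof.
move=> en; rewrite /=; case: x => m hm /=.
case: (ltnP m.+1 n) => h; first by rewrite modn_small.
have e : m.+1 = n by apply/eqP; rewrite eqn_leq hm h.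
by rewrite e modnn /=; move: en; rewrite -e /= negbK => ->.
Qed.

Lemma odd_ord_pred n (x : 'I_n) : ~~ odd n -> odd (val (ord_pred x)) = ~~ odd x.
Proof.
move=> en; have := odd_ordS (ord_pred x) en; rewrite ord_predK => ->.
by rewrite negbK.
Qed.

Lemma sign_ordS n (x : 'I_n) : ~~ odd n ->
  (-1) ^+ (val (ordS x)) = - (-1) ^+ (val x) :> int.
Proof. by move=> en; rewrite -signr_odd odd_ordS // signrN signr_odd. Qed.

Lemma sign_ord_pred n (x : 'I_n) : ~~ odd n ->
  (-1) ^+ (val (ord_pred x)) = - (-1) ^+ (val x) :> int.
Proof. by move=> en; rewrite -signr_odd odd_ord_pred // signrN signr_odd. Qed.

Lemma int_double0 (x : int) : x + x = 0 -> x = 0.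
Proof. by move=> h; apply/eqP; have := h; rewrite -mulr2n => /eqP; rewrite mulrn_eq0. Qed.

Lemma alt_sum n (F : 'I_n -> int) : (forall m, F (ordS m) = - F m) ->
  \sum_(m < n) F m = 0.
Proof.
move=> h; apply: int_double0.
rewrite {2}(reindex (@ordS n)) /=; last exact: onW_bij (ordS_bij _).
by rewrite -big_split /= big1 // => m _; rewrite h subrr.
Qed.

Section Std.
Variables (t : nat) (p : 'I_t -> nat).
Hypothesis hp0 : forall i, (0 < p i)%N.
Local Notation gen := (gen t p).

Definition std (a : int) (c : 'I_t -> int) (g : gen) : int :=
  match g with Ga => a | Gs0 => 0 | Gs k m => c k * (-1) ^+ (val m) end.

Lemma std_Cbar a c : (forall k, odd (p k) -> c k = 0) ->
  a *+ 2 = \sum_k c k -> is_Cbar_form (std a c).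
Proof.
move=> hc ha; apply/Cbar_formE; split => /=.
- move=> k; case: (boolP (odd (p k))) => ok.
    by rewrite big1 // => m _; rewrite hc // mul0r.
  by rewrite alt_sum // => m; rewrite sign_ordS // mulrN.
- rewrite mulr0 addr0.
  rewrite (eq_bigr (fun k => c k)); last first.
    move=> k _; rewrite (bigD1 (z0 hp0 k)) //= big1 ?addr0 /=.
      by rewrite expr0 mulr1 mul1r.
    by move=> m nm; have /negbTE -> : (val m != 0)%N by []; rewrite mul0r.
  by rewrite -ha addrA -mulr2n subrr.
- by rewrite addr0.
- move=> k m; case: (boolP (odd (p k))) => ok; first by rewrite hc // !mul0r addr0.
  by rewrite sign_ordS // mulrN subrr.
Qed.

Definition cf (f : gen -> int) (k : 'I_t) := f (Gs k (z0 hp0 k)).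

Lemma Cbar_std (f : gen -> int) : is_Cbar_form f ->
  [/\ forall g, f g = std (f Ga) (cf f) g,
      forall k, odd (p k) -> cf f k = 0 &
      f Ga *+ 2 = \sum_k cf f k].
Proof.
case/Cbar_formE => h1 h2 h3 h4.
have f0 : f Gs0 = 0 by apply: int_double0.
have ht := fun k => alt_tube hp0 (h4 k).
split.
- by case=> [||k m] //=; rewrite ht mulrC.
- move=> k ok; apply: int_double0; rewrite /cf.
  have lk : ((p k).-1 < p k)%N by rewrite ltn_predL. pose l : 'I_(p k) := Ordinal lk.
  have el : ordS l = z0 hp0 k.
    by apply: val_inj; rewrite /= prednK ?modnn // hp0.
  have := h4 k l; rewrite el ht /= -signr_odd.
  suff -> : odd (p k).-1 = false by rewrite expr0 mul1r.
  by move: ok; rewrite -{1}(prednK (hp0 k)) /= => /negbTE.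
- move: h2; rewrite f0 mulr0 addr0 addrA -mulr2n => /eqP; rewrite subr_eq0 => /eqP ->.
  apply: eq_bigr => k _; rewrite (bigD1 (z0 hp0 k)) //= big1 ?addr0 ?mul1r //.
  by move=> m nm; have /negbTE -> : (val m != 0)%N by []; rewrite mul0r.
Qed.

Lemma sum_std (I : finType) (w : I -> int) (a : I -> int) (c : I -> 'I_t -> int) g :
  \sum_k w k * std (a k) (c k) g =
  std (\sum_k w k * a k) (fun i => \sum_k w k * c k i) g.
Proof.
case: g => [||i m] /=; first by [].
  by rewrite big1 // => k _; rewrite mulr0.
by rewrite mulr_suml; apply: eq_bigr => k _; rewrite mulrA.
Qed.

Lemma std_ext a a' c c' g : a = a' -> c =1 c' -> std a c g = std a' c' g.
Proof. by move=> -> e; case: g => //= i m; rewrite e. Qed.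

End Std.

Lemma pred_mod n (hn : (0 < n)%N) j (l : 'I_n) :
  (val (ord_pred l) == j %% n)%N = (val l == j.+1 %% n)%N.
Proof.
pose u : 'I_n := Ordinal (ltn_pmod j hn).
have -> : (j %% n)%N = val u by [].
have -> : (j.+1 %% n)%N = val (ordS u) by rewrite /= -addn1 -modnDml addn1.
have -> : (val (ord_pred l) == val u) = (ord_pred l == u) by [].
have -> : (val l == val (ordS u)) = (l == ordS u) by [].
by rewrite eq_sym -(can2_eq (@ordSK _) (@ord_predK _)) eq_sym.
Qed.

Lemma Pfalse : (false%:Z) = 0 :> int. Proof. by []. Qed.
Lemma P1 : (1%Z) = 1 :> int. Proof. by []. Qed.
Lemma Ptrue : (true%:Z) = 1 :> int. Proof. by []. Qed.

Section Pair.
Variables (t : nat) (p : 'I_t -> nat).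
Hypothesis hp0 : forall i, (0 < p i)%N.
Local Notation gen := (gen t p).

Definition sv (i : 'I_t) (j : nat) (h : gen) : int :=
  match h with Gs k l => ((k == i) && (val l == j %% p i)%N)%:Z | _ => 0 end.

Lemma cox_Gs0 (x : gen -> int) : cox x Gs0 = x Ga * (t%:Z - 2) + x Gs0.
Proof.
rewrite /cox sum_gen /= /delta eqxx mulr1 big1 ?addr0 //.
by move=> i _; apply: big1 => j _; rewrite mulr0.
Qed.

Lemma iter_simple i j h : iter j (@cox t p) (@simple_s t p i) h = sv i j h.
Proof.
elim: j h => [|j IH] h.
  by case: h => //= k l; rewrite mod0n.
rewrite [iter _ _ _]/= (cox_ext IH).
case: h => [||k m].
- by rewrite cox_Ga.
- by rewrite cox_Gs0 /= mul0r addr0.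
  rewrite cox_Gs oppr0 mul0r add0r.
  case: (eqVneq k i) => [e|ne]; last by rewrite /= !(negbTE ne).
  by subst k; rewrite /= !eqxx /= pred_mod.
Qed.

Lemma hat_s_val i (h : gen) : @hat_s t p i h =
  match h with Gs k m => (k == i)%:Z * (-1) ^+ (val m) | _ => 0 end.
Proof.
rewrite /hat_s; under eq_bigr do rewrite iter_simple.
case: h => [||k m] /=; try by rewrite big1 // => j _; rewrite mulr0.
case: (eqVneq k i) => [e|ne]; last first.
  by rewrite big1 ?(negbTE ne) ?mul0r // => j _; rewrite mulr0.
subst k; rewrite mul1r.
rewrite -(sum_pick (fun j : 'I_(p i) => (-1) ^+ (val j)) m).
by apply: eq_bigr => j _; rewrite /= modn_small // eq_sym.
Qed.

Lemma tilde_s_val i (h : gen) : ~~ odd (p i) -> @tilde_s t p i h =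
  match h with Gs k m => (k == i)%:Z * (~~ odd (val m))%:Z | _ => 0 end.
Proof.
move=> ep; rewrite /tilde_s; under eq_bigr do rewrite iter_simple.
case: h => [||k m] /=; try by rewrite big1.
case: (eqVneq k i) => [e|ne]; last first.
  by rewrite big1 ?(negbTE ne) ?mul0r.
subst k; rewrite mul1r.
have hp2 : (p i = 2 * (p i)./2)%N.
  by rewrite -{1}(odd_double_half (p i)) (negbTE ep) add0n -mul2n.
have e2 : forall j : 'I_(p i)./2, ((2 * j) %% p i = 2 * j)%N.
  move=> j; rewrite modn_small // {2}hp2 ltn_mul2l /=; exact: ltn_ord.
case: (boolP (odd m)) => om /=.
  rewrite big1 // => j _; rewrite e2.
  by have /negbTE -> : (val m != 2 * j)%N by apply: contraTneq om => ->; rewrite oddM.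
have hm2 : (nat_of_ord m = 2 * (nat_of_ord m)./2)%N.
  by rewrite -{1}(odd_double_half m) (negbTE om) add0n -mul2n.
have lm : ((nat_of_ord m)./2 < (p i)./2)%N.
  by rewrite -(ltn_pmul2l (isT : (0 < 2)%N)) -hm2 -hp2.
have -> : (1%Z : int) = 1 by []. rewrite -(sum_pick (fun _ => 1) (Ordinal lm)); apply: eq_bigr => j _.
by rewrite e2 mul1r {1}hm2 eqn_mul2l /= eq_sym.
Qed.

Lemma pairing_tube (v : gen -> int) i (w : nat -> int) g :
  v Ga = 0 -> v Gs0 = 0 -> (forall k m, v (Gs k m) = (k == i)%:Z * w (val m)) ->
  pairing v g = \sum_(l < p i) w l * eulerG (Gs i l) g.
Proof.
move=> va vs vk; rewrite pairingE sum_gen va vs !mul0r !add0r.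
rewrite (bigD1 i) //= [X in _ + X]big1 ?addr0.
  by apply: eq_bigr => l _; rewrite vk eqxx mul1r.
by move=> k nk; apply: big1 => l _; rewrite vk (negbTE nk) mul0r mul0r.
Qed.

Lemma W_Ga i (w : nat -> int) :
  \sum_(l < p i) w l * eulerG (Gs i l) Ga = - w (p i).-1.
Proof.
have lk : ((p i).-1 < p i)%N by rewrite ltn_predL.
rewrite -(sum_pick w (Ordinal lk)) -sumrN; apply: eq_bigr => l _ /=.
rewrite mulrN; congr (- (_ * _)); congr (Posz (nat_of_bool _)).
by rewrite -[in RHS](eqn_add2r 1) !addn1 prednK.
Qed.

Lemma W_Gs0 i (w : nat -> int) :
  \sum_(l < p i) w l * eulerG (Gs i l) Gs0 = 0.
Proof. by rewrite big1 // => l _; rewrite mulr0. Qed.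

Lemma W_Gs i (w : nat -> int) k m :
  \sum_(l < p i) w l * eulerG (Gs i l) (Gs k m) =
  if i == k then w m - w (@ord_pred (p k) m) else 0.
Proof.
case: (eqVneq i k) => [e|ne] /=; last first.
  by rewrite big1 // => l _; rewrite (negbTE ne) mulr0.
subst k; rewrite eqxx; under eq_bigr do rewrite mulrBr.
by rewrite sumrB (sum_pick (fun l => w l)) (sum_shift (fun l => w l)).
Qed.

Lemma pairing_hat i : ~~ odd (p i) ->
  forall g, pairing (@hat_s t p i) g = std 1 (fun k => (k == i)%:Z * 2) g.
Proof.
move=> ep g; rewrite (pairing_tube (i := i) (w := fun n => (-1) ^+ n)); last first.
- by move=> k m; rewrite hat_s_val.
- by rewrite hat_s_val.
- by rewrite hat_s_val.
case: g => [||k m] /=.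
- rewrite W_Ga -signr_odd.
  have -> : odd (p i).-1 by move: ep; rewrite -{1}(prednK (hp0 i)) /= negbK.
  by rewrite expr1 opprK.
- exact: W_Gs0.
- rewrite W_Gs eq_sym; case: (eqVneq k i) => [e|ne]; last by rewrite Pfalse !mul0r.
  subst k; rewrite Ptrue sign_ord_pred //; ring.
Qed.

Lemma pairing_tilde i : ~~ odd (p i) ->
  forall g, pairing (@tilde_s t p i) g = std 0 (fun k => (k == i)%:Z) g.
Proof.
move=> ep g; rewrite (pairing_tube (i := i) (w := fun n => (~~ odd n)%:Z)); last first.
- by move=> k m; rewrite tilde_s_val.
- by rewrite tilde_s_val.
- by rewrite tilde_s_val.
case: g => [||k m].
- rewrite (W_Ga i (fun n => (~~ odd n)%:Z)) /=.
  have -> : odd (p i).-1 by move: ep; rewrite -{1}(prednK (hp0 i)) /= negbK.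
  by [].
- exact: (W_Gs0 i (fun n => (~~ odd n)%:Z)).
- rewrite (W_Gs i (fun n => (~~ odd n)%:Z)) eq_sym /=; case: (eqVneq k i) => [e|ne]; last by rewrite Pfalse mul0r.
  subst k; rewrite odd_ord_pred // Ptrue mul1r -signr_odd.
  by case: (odd m).
Qed.

End Pair.

From Stdlib Require Import FunctionalExtensionality.

Lemma sum_ind n (i0 : 'I_n) : \sum_(i < n) (i == i0)%:Z = 1.
Proof.
rewrite (bigD1 i0) //= eqxx big1 ?addr0 // => i ni.
by rewrite (negbTE ni).
Qed.

Section PartI.
Variables (t : nat) (p : 'I_t -> nat).
Hypothesis hp0 : forall i, (0 < p i)%N.
Variables (r : nat) (hr : (r <= t)%N).
Hypothesis hpar : forall i : 'I_t, ~~ odd (p i) = (val i < r)%N.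
Variable (hr0 : (0 < r)%N).
Local Notation gen := (gen t p).
Local Notation w := (widen_ord hr).

Let k0 : 'I_r := Ordinal hr0.
Let i1 := w k0.

Definition bI (k : 'I_r) : gen -> int :=
  if val k == 0%N then pairing (hat_s i1)
  else pairing (fun h => tilde_s (w k) h - tilde_s i1 h).

Definition aI (k : 'I_r) : int := if val k == 0%N then 1 else 0.
Definition cI (k : 'I_r) (i : 'I_t) : int :=
  if val k == 0%N then (i == i1)%:Z * 2 else (i == w k)%:Z - (i == i1)%:Z.

Lemma ev_w k : ~~ odd (p (w k)).
Proof. by rewrite hpar /=. Qed.

Lemma bI_std k g : bI k g = std (aI k) (cI k) g.
Proof.
rewrite /bI /aI /cI; case: ifP => _.
  exact: (pairing_hat hp0 (ev_w k0)).
rewrite pairing_sub (pairing_tilde hp0 (ev_w k)) (pairing_tilde hp0 (ev_w k0)).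
by case: g => [||i m] //=; rewrite ?subr0 // mulrBl.
Qed.

Lemma neq_k0 (k : 'I_r) : (k != k0) = (val k != 0%N).
Proof. by []. Qed.

Lemma Asum (d : 'I_r -> int) : \sum_k d k * aI k = d k0.
Proof.
rewrite (bigD1 k0) //= big1 ?addr0 /aI /=; first by rewrite mulr1.
by move=> k; rewrite neq_k0 => /negbTE ->; rewrite mulr0.
Qed.

Lemma w_eq (k k' : 'I_r) : (w k == w k') = (k == k').
Proof. by []. Qed.

Lemma Csum_w (d : 'I_r -> int) k : k != k0 -> \sum_k' d k' * cI k' (w k) = d k.
Proof.
move=> nk; rewrite (bigD1 k0) //= /cI /=.
have -> : (w k == i1) = false by rewrite /i1 w_eq; apply/negbTE.
rewrite Pfalse mul0r mulr0 add0r (bigD1 k) //= [X in _ + X]big1 ?addr0.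
  by move: nk; rewrite neq_k0 => /negbTE ->; rewrite eqxx Ptrue mulr1.
move=> k' /andP [nk0 nkk]; move: nk0; rewrite neq_k0 => /negbTE ->.
rewrite w_eq eq_sym (negbTE nkk).
by apply/eqP; rewrite mulf_eq0; apply/orP; right.
Qed.

Lemma Csum_i1 (d : 'I_r -> int) :
  \sum_k d k * cI k i1 = d k0 * 2 - \sum_(k | k != k0) d k.
Proof.
rewrite (bigD1 k0) //= /cI /= mul1r -sumrN; congr (_ + _).
apply: eq_bigr => k nk; have := nk; rewrite neq_k0 => /negbTE ->.
have -> : (i1 == w k) = false by rewrite /i1 w_eq eq_sym; apply/negbTE.
by rewrite Pfalse sub0r mulrN1.
Qed.

Lemma Csum_out (d : 'I_r -> int) i : (r <= val i)%N -> \sum_k d k * cI k i = 0.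
Proof.
move=> hi; apply: big1 => k _; rewrite /cI.
have ne : forall k' : 'I_r, (i == w k') = false.
  by move=> k'; apply/negbTE; apply/eqP => e; move: hi; rewrite e /= leqNgt ltn_ord.
by rewrite /i1 !ne Pfalse mul0r subr0; case: ifP => _; rewrite mulr0.
Qed.

Lemma bI_Cbar k : is_Cbar_form (bI k).
Proof.
have -> : bI k = std (aI k) (cI k) by apply: functional_extensionality => g; apply: bI_std.
apply: (std_Cbar hp0).
  move=> i oi; have hi : (r <= val i)%N by rewrite leqNgt -hpar oi.
  have ne : forall k' : 'I_r, (i == w k') = false.
    by move=> k'; apply/negbTE; apply/eqP => e; move: hi; rewrite e /= leqNgt ltn_ord.
  by rewrite /cI /i1 !ne Pfalse mul0r subr0; case: ifP.
rewrite /aI /cI; case: ifP => _.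
  by rewrite -mulr_suml sum_ind mul1r.
by rewrite sumrB !sum_ind subrr.
Qed.

Lemma sum_narrow (F : 'I_t -> int) : (forall i, (r <= val i)%N -> F i = 0) ->
  \sum_i F i = \sum_(k < r) F (w k).
Proof.
move=> hF; rewrite (bigID (fun i : 'I_t => (val i < r)%N)) /= [X in _ + X]big1 ?addr0.
  exact: big_ord_narrow.
by move=> i; rewrite -leqNgt => /hF.
Qed.

Lemma partI : is_Cbar_dual_basis bI.
Proof.
split; first exact: bI_Cbar.
move=> f hf; have [fstd fodd f2] := Cbar_std hp0 hf.
have cf_out : forall i, (r <= val i)%N -> cf hp0 f i = 0.
  by move=> i hi; apply: fodd; move: hi; rewrite leqNgt -hpar negbK.
have main : forall d : 'I_r -> int, (forall g, f g = \sum_k d k * bI k g) <->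
    (d k0 = f Ga /\ forall k, k != k0 -> d k = cf hp0 f (w k)).
  move=> d; split.
    move=> h; split.
      by rewrite h; under eq_bigr do rewrite bI_std; rewrite sum_std /= Asum.
    move=> k nk; rewrite /cf h; under eq_bigr do rewrite bI_std.
    by rewrite sum_std /= expr0 mulr1 Csum_w.
  case=> d0 dk g; rewrite fstd; under eq_bigr do rewrite bI_std.
  rewrite sum_std; apply: std_ext; first by rewrite Asum.
  move=> i; case: (eqVneq i i1) => [->|ni].
    rewrite Csum_i1 d0.
    have : f Ga *+ 2 = cf hp0 f i1 + \sum_(k | k != k0) d k.
      rewrite f2 (sum_narrow cf_out) (bigD1 k0) //=; congr (_ + _).
      by apply: eq_bigr => k nk; rewrite dk.
    by move=> e; rewrite mulr_natr e addrK.
  case: (ltnP (val i) r) => hi; last by rewrite Csum_out // cf_out.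
  have ei : i = w (Ordinal hi) by apply: val_inj.
  have nk : Ordinal hi != k0.
    by rewrite neq_k0 /=; apply: contra ni => /eqP e; apply/eqP; apply: val_inj.
  by rewrite ei Csum_w // dk.
exists [ffun k => if val k == 0%N then f Ga else cf hp0 f (w k)]; split.
  apply/main; split; first by rewrite ffunE.
  by move=> k nk; rewrite ffunE; move: nk; rewrite neq_k0 => /negbTE ->.
move=> d /main [d0 dk]; apply/ffunP => k; rewrite ffunE.
case: (eqVneq k k0) => [->|nk]; first by rewrite /= d0.
by move: (nk); rewrite neq_k0 => /negbTE ->; rewrite dk.
Qed.

End PartI.

Theorem proposition3p10 (t : nat) (p : 'I_t -> nat)
  (hp : forall i, (2 <= p i)%N)
  (r : nat) (hr : (r <= t)%N)
  (hpar : forall i : 'I_t, ~~ odd (p i) = (val i < r)%N) :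
  (forall hr0 : (0 < r)%N,
     let i1 := widen_ord hr (Ordinal hr0) in
     @is_Cbar_dual_basis t p int 'I_r
       (fun k : 'I_r =>
          if val k == 0%N then pairing (hat_s i1)
          else pairing (fun h => tilde_s (widen_ord hr k) h - tilde_s i1 h)))
  /\
  (r = 0%N ->
     @is_Cbar_dual_basis t p 'Z_2 'I_2
       (fun k : 'I_2 => if val k == 0%N then @rk2 t p else @deg2 t p)).
Proof.
have hp0 : forall i, (0 < p i)%N by move=> i; apply: leq_trans (hp i).
split.
  move=> hr0 /=; exact: (partI hp0 hr hpar hr0).
move=> r0; apply: partII => // i.
by have := hpar i; rewrite r0 ltn0 => /negbFE.
Qed.
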